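(* Let $s$ be a positive integer and let $G$ be an $n$-vertex $K_{s,s}$-free graph. If $e(G)>6^s s\cdot n^{3/2}$, then the number of induced copies of the $4$-cycle $C_4$ in $G$ is at least $\frac{e(G)^4}{16n^4}$.
   Context: $G$ is $K_{s,s}$-free if it contains no copy of $K_{s,s}$ as a subgraph. An induced copy of $C_4$ is a set of four vertices $u,x,v,y$ with $ux,xv,vy,yu\in E(G)$ and $uv,xy\notin E(G)$ (counted as unlabeled subgraphs). *)

(* Defs.v *)
From mathcomp Require Import all_boot.
From Stdlib Require Import Reals.
Set Implicit Arguments.
Unset Strict Implicit.
Unset Printing Implicit Defensive.

Definition simple_graph (T : finType) (e : rel T) : Prop :=
  symmetric e /\ irreflexive e.

Definition edges (T : finType) (e : rel T) : {set {set T}} :=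
  [set E : {set T} | (#|E| == 2) &&
     [exists x, exists y, (E == [set x; y]) && e x y]].

Definition nedges (T : finType) (e : rel T) : nat := #|edges e|.

Definition has_Kss (T : finType) (e : rel T) (s : nat) : Prop :=
  exists A B : {set T},
    [/\ #|A| = s, #|B| = s, [disjoint A & B] &
        forall a b, a \in A -> b \in B -> e a b].

Definition Kss_free (T : finType) (e : rel T) (s : nat) : Prop :=
  ~ has_Kss e s.

Definition induced_C4_set (T : finType) (e : rel T) (S : {set T}) : bool :=
  [exists u, exists x, exists v, exists y,
     [&& S == [set u; x; v; y], #|S| == 4,
         e u x, e x v, e v y, e y u, ~~ e u v & ~~ e x y]].

(* Number of induced copies of C4 (unlabeled): each such 4-set carries
   exactly one induced C4. *)
Definition n_induced_C4 (T : finType) (e : rel T) : nat :=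
  #|[set S : {set T} | induced_C4_set e S]|.

(* Main.v *)
Require Import Defs.
From mathcomp Require Import all_boot.
From Stdlib Require Import Reals.
From mathcomp Require Import all_boot zify.
Set Implicit Arguments.
Unset Strict Implicit.
Unset Printing Implicit Defensive.

Lemma sum_ind (I : finType) (P : pred I) : \sum_i (P i : nat) = #|P|.
Proof. rewrite -sum1_card [in RHS]big_mkcond /=; apply: eq_bigr => i _; by rewrite unfold_in; case: (P i). Qed.

Lemma rearr2 (a b k : nat) : a * b ^ k + b * a ^ k <= a ^ k.+1 + b ^ k.+1.
Proof.
wlog ab : a b / a <= b.
  move=> H; case: (leqP a b) => h; first exact: H.
  by rewrite addnC [X in _ <= X]addnC; apply: H; apply: ltnW.
have hk : a ^ k <= b ^ k by case: k => [|k] //; rewrite leq_exp2r.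
move: (subnK ab) (subnK hk); set t := b - a; set u := b ^ k - a ^ k => Eb Ek.
rewrite !expnS -Ek -Eb; nia.
Qed.

Lemma cheb (I : finType) (P : pred I) (f : I -> nat) (k : nat) :
  (\sum_(i in P) f i) * (\sum_(i in P) f i ^ k) <= #|P| * \sum_(i in P) f i ^ k.+1.
Proof.
rewrite -(leq_pmul2l (isT : 0 < 2)).
have E1 : 2 * (#|P| * \sum_(i in P) f i ^ k.+1) =
   \sum_(i in P) \sum_(j in P) (f i ^ k.+1 + f j ^ k.+1).
  rewrite [RHS](eq_bigr (fun i => #|P| * f i ^ k.+1 + \sum_(j in P) f j ^ k.+1)); last first.
    by move=> i _; rewrite big_split /= sum_nat_const.
  by rewrite big_split /= -big_distrr /= sum_nat_const; lia.
have E2 : 2 * ((\sum_(i in P) f i) * (\sum_(i in P) f i ^ k)) =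
   \sum_(i in P) \sum_(j in P) (f i * f j ^ k + f j * f i ^ k).
  rewrite [RHS](eq_bigr (fun i => f i * \sum_(j in P) f j ^ k + (\sum_(j in P) f j) * f i ^ k)); last first.
    by move=> i _; rewrite big_split /= big_distrr big_distrl.
  by rewrite big_split /= -!big_distrl -big_distrr /=; lia.
rewrite E1 E2; apply: leq_sum => i _; apply: leq_sum => j _; exact: rearr2.
Qed.

Lemma powmean (I : finType) (P : pred I) (f : I -> nat) (k : nat) :
  (\sum_(i in P) f i) ^ k.+1 <= #|P| ^ k * \sum_(i in P) f i ^ k.+1.
Proof.
elim: k => [|k IH]; first by rewrite expn1 expn0 mul1n; apply: leq_sum => i _; rewrite expn1.
rewrite expnS.
apply: (leq_trans (leq_mul (leqnn (\sum_(i in P) f i)) IH)).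
by rewrite mulnCA (expnS #|P| k) (mulnC #|P|) -mulnA leq_mul2l cheb orbT.
Qed.

Lemma cauchy (I : finType) (P : pred I) (f : I -> nat) :
  (\sum_(i in P) f i) ^ 2 <= #|P| * \sum_(i in P) f i ^ 2.
Proof. by have := powmean P f 1; rewrite expn1. Qed.

Lemma ffact_le_exp (m k : nat) : m ^_ k <= m ^ k.
Proof.
elim: k => [|k IH] //; rewrite ffactnSr expnS mulnC.
by apply: leq_mul => //; apply: leq_subr.
Qed.

Lemma exp_ffact (m k : nat) : m ^ k <= m ^_ k + k * k * m ^ k.-1.
Proof.
elim: k => [|k IH]; first by rewrite ffactn0 expn0.
rewrite ffactnSr expnS /=.
have h1 : m * m ^_ k <= m ^_ k * (m - k) + k * m ^ k.
  have := ffact_le_exp m k => hf.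
  case: (leqP k m) => hkm.
    have -> : m * m ^_ k = m ^_ k * (m - k) + k * m ^_ k by rewrite [k * _]mulnC -mulnDr subnK // mulnC.
    by rewrite leq_add2l leq_mul.
  by rewrite ffact_small // muln0.
have h2 : m * (k * k * m ^ k.-1) <= k * k * m ^ k.
  case: k {IH h1} => [|k] /=; first by rewrite !muln0.
  by rewrite expnS; nia.
have := leq_mul (leqnn m) IH; rewrite mulnDr => h3.
nia.
Qed.

Definition nb (T : finType) (e : rel T) (x : T) : {set T} := [set w | e x w].

Lemma kss_bound (T : finType) (e : rel T) (k : nat) (x : T) (W : {set T})
  (f : {ffun 'I_k.+1 -> T}) :
  simple_graph e -> Kss_free e k.+2 -> W \subset nb e x -> injectiveb f ->
  #|[set u in W | f \in ffun_on [set v in W | e u v]]| <= k.+1.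
Proof.
move=> [esym eirr] hfree sW finj.
rewrite leqNgt; apply/negP => hU.
case/card_geqP: hU => sq [usq szq subq].
have memU : forall u, u \in sq -> u \in W /\ forall i, (f i \in W) && e u (f i).
  move=> u /subq; rewrite inE => /andP [uW /ffun_onP fu]; split => // i.
  by have := fu i; rewrite inE.
have [u0 u0q] : exists u0, u0 \in sq by case: sq {usq subq memU} szq => // u0 sq _; exists u0; exact: mem_head.
have fW : forall i, f i \in W by move=> i; have [_ /(_ i) /andP []] := memU u0 u0q.
have exW : forall w, w \in W -> e x w by move=> w /(subsetP sW); rewrite inE.
apply: hfree.
exists (x |: (f @: [set: 'I_k.+1])), [set u in sq]; split.
- rewrite cardsU1 card_imset; last exact/injectiveP.
  rewrite cardsT card_ord.
  suff -> : x \notin f @: [set: 'I_k.+1] by [].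
  apply/imsetP => [[i _ xi]].
  by have := exW _ (fW i); rewrite -xi eirr.
- by rewrite cardsE (card_uniqP usq) szq.
- rewrite disjoint_subset; apply/subsetP => a; rewrite !inE => /orP [/eqP -> | /imsetP [i _ ->]].
    apply/negP => /memU [xW _]; by have := exW _ xW; rewrite eirr.
  apply/negP => /memU [_ /(_ i) /andP [_]]; by rewrite eirr.
- move=> a b; rewrite !inE => /orP [/eqP -> | /imsetP [i _ ->]] /memU [bW hb].
    exact: exW.
  by have /andP [_] := hb i; rewrite esym.
Qed.

Lemma sum_mem (I : finType) (A : {pred I}) : \sum_i (i \in A : nat) = #|A|.
Proof. rewrite -sum1_card [in RHS]big_mkcond /=; apply: eq_bigr => i _; by case: (i \in A). Qed.

Lemma density_sum (T : finType) (e : rel T) (k : nat) (x : T) (W : {set T}) :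
  simple_graph e -> Kss_free e k.+2 -> W \subset nb e x ->
  \sum_(u in W) #|[set v in W | e u v]| ^ k.+1 <=
    k.+1 * #|W| ^ k.+1 + #|W| * (k.+1 * k.+1 * #|W| ^ k).
Proof.
move=> hs hf sW.
set m := #|W|.
have E1 : \sum_(u in W) #|[set v in W | e u v]| ^ k.+1 =
   \sum_(f : {ffun 'I_k.+1 -> T}) #|[set u in W | f \in ffun_on [set v in W | e u v]]|.
  rewrite (eq_bigr (fun u => \sum_(f : {ffun 'I_k.+1 -> T}) (f \in ffun_on [set v in W | e u v] : nat))); last first.
    by move=> u _; rewrite sum_mem card_ffun_on card_ord.
  rewrite exchange_big /=; apply: eq_bigr => f _.
  rewrite -sum_mem [LHS]big_mkcond /=; apply: eq_bigr => u _; rewrite !inE.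
  by case: (u \in W).
pose g (f : {ffun 'I_k.+1 -> T}) := 
  k.+1 * ((f \in ffun_on W) && injectiveb f : nat) + m * ((f \in ffun_on W) && ~~ injectiveb f : nat).
have E2 : \sum_(f : {ffun 'I_k.+1 -> T}) #|[set u in W | f \in ffun_on [set v in W | e u v]]| <= \sum_(f : {ffun 'I_k.+1 -> T}) g f.
  apply: leq_sum => f _; rewrite /g.
  case onW: (f \in ffun_on W) => /=; last first.
    rewrite !muln0 leqn0 cards_eq0; apply/eqP/setP => u; rewrite !inE; apply/negP => /andP [uW /ffun_onP h].
    move/negP: onW; apply; apply/ffun_onP => i; have := h i; rewrite inE => /andP [] //.
  case inj: (injectiveb f) => /=.
    by have := kss_bound hs hf sW inj; rewrite /nat_of_bool muln1 muln0 addn0.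
  rewrite /nat_of_bool muln0 muln1 add0n; apply: subset_leq_card; apply/subsetP => u; rewrite inE => /andP [] //.
have E3 : \sum_(f : {ffun 'I_k.+1 -> T}) g f = k.+1 * \sum_(f : {ffun 'I_k.+1 -> T}) ((f \in ffun_on W) && injectiveb f : nat) +
                       m * \sum_(f : {ffun 'I_k.+1 -> T}) ((f \in ffun_on W) && ~~ injectiveb f : nat).
  by rewrite !big_distrr -big_split.
have I1 : \sum_(f : {ffun 'I_k.+1 -> T}) ((f \in ffun_on W) && injectiveb f : nat) = m ^_ k.+1.
  have := card_inj_ffuns_on 'I_k.+1 (mem W); rewrite card_ord => <-.
  by rewrite -sum_mem; apply: eq_bigr => f _; rewrite !inE.
have I12 : \sum_(f : {ffun 'I_k.+1 -> T}) ((f \in ffun_on W) && injectiveb f : nat) +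
           \sum_(f : {ffun 'I_k.+1 -> T}) ((f \in ffun_on W) && ~~ injectiveb f : nat) = m ^ k.+1.
  rewrite -big_split /=.
  rewrite (eq_bigr (fun f => (f \in ffun_on W : nat))); last by move=> f _; case: (f \in ffun_on W); case: (injectiveb f).
  by rewrite sum_mem card_ffun_on card_ord.
have hff := exp_ffact m k.+1; have hle := ffact_le_exp m k.+1.
rewrite E1; apply: (leq_trans E2); rewrite E3.
move: I12; rewrite I1 => I12.
have hI2 : \sum_(f : {ffun 'I_k.+1 -> T}) ((f \in ffun_on W) && ~~ injectiveb f : nat) <= k.+1 * k.+1 * m ^ k by simpl in hff; lia.
apply: leq_add; first by rewrite leq_mul2l hle orbT.
by rewrite leq_mul2l hI2 orbT.
Qed.

Lemma density (T : finType) (e : rel T) (k : nat) (x : T) (W : {set T}) :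
  simple_graph e -> Kss_free e k.+2 -> W \subset nb e x ->
  4 * (\sum_(u in W) #|[set v in W | e u v]|) <=
    #|W| ^ 2 + 4 * (4 ^ k.+1 * (k.+1 + k.+1 * k.+1)) * #|W|.
Proof.
move=> hs hf sW.
have hd := density_sum hs hf sW.
have hp := powmean (mem W) (fun u => #|[set v in W | e u v]|) k.
set m := #|W| in hd hp *.
set a := \sum_(u in W) #|[set v in W | e u v]| in hp *.
set c := k.+1 + k.+1 * k.+1.
set Y := m ^ (k.+1 + k).
have ha : a ^ k.+1 <= c * Y.
  apply: (leq_trans hp).
  have -> : c * Y = m ^ k * (k.+1 * m ^ k.+1 + m * (k.+1 * k.+1 * m ^ k)).
    rewrite /Y /c expnD expnS; set X := m ^ k; nia.
  by rewrite leq_mul2l hd orbT.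
have hleq : a <= m * m.
  rewrite /a -sum_nat_const; apply: leq_sum => u _; apply: subset_leq_card.
  by apply/subsetP => v; rewrite inE => /andP [].
case: (leqP (4 * a) (m ^ 2)) => h4; first by apply: (leq_trans h4); apply: leq_addr.
have h5 : (m ^ 2) ^ k.+1 < (4 * a) ^ k.+1 by rewrite ltn_exp2r.
rewrite expnMn in h5.
have h6 : m * Y < (4 ^ k.+1 * c) * Y.
  have -> : m * Y = (m ^ 2) ^ k.+1 by rewrite /Y -expnS -expnM; congr (_ ^ _); lia.
  apply: (leq_trans h5); rewrite -mulnA leq_mul2l ha orbT //.
move: h6; rewrite ltn_mul2r => /andP [_ hmL].
rewrite -[m ^ 2]add0n leq_add //.
have := leq_mul (leqnn 4) hleq; have := leq_mul (leqnn (4 * m)) (ltnW hmL); nia.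
Qed.

Definition chi (T : finType) (e : rel T) (x y u v : T) : bool :=
  [&& e x u, e x v, e y u & e y v].

Definition cn (T : finType) (e : rel T) (x y : T) : {set T} := nb e x :&: nb e y.

Lemma sum_mems (I : finType) (A : {set I}) : \sum_i (i \in A : nat) = #|A|.
Proof. exact: sum_mem. Qed.

Lemma chiE (T : finType) (e : rel T) x y u v :
  chi e x y u v = (u \in cn e x y) && (v \in cn e x y).
Proof. rewrite /chi /cn !inE; by case: (e x u); case: (e x v); case: (e y u); case: (e y v). Qed.

Lemma sum_chi (T : finType) (e : rel T) x y :
  \sum_u \sum_v (chi e x y u v : nat) = #|cn e x y| ^ 2.
Proof.
rewrite -(sum_mems (cn e x y)) expnS expn1 big_distrl /=; apply: eq_bigr => u _.
rewrite big_distrr /=; apply: eq_bigr => v _.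
by rewrite chiE; case: (u \in cn e x y); case: (v \in cn e x y).
Qed.

Lemma sum_chi_eq (T : finType) (e : rel T) x y :
  \sum_u \sum_v ((u == v) && chi e x y u v : nat) = #|cn e x y|.
Proof.
rewrite -(sum_mems (cn e x y)); apply: eq_bigr => u _.
rewrite (bigD1 u) //= eqxx big1 /=; last first.
  by move=> v; rewrite eq_sym => /negbTE ->.
by rewrite addn0 chiE; case: (u \in cn e x y).
Qed.

Lemma sum_chi_neq (T : finType) (e : rel T) x y :
  \sum_u \sum_v ((u != v) && chi e x y u v : nat) + #|cn e x y| = #|cn e x y| ^ 2.
Proof.
rewrite -sum_chi -sum_chi_eq -big_split /=; apply: eq_bigr => u _.
rewrite -big_split /=; apply: eq_bigr => v _.
by case: (u == v); case: (chi e x y u v).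
Qed.

Lemma sum_chi_adj (T : finType) (e : rel T) x y :
  \sum_u \sum_v (e u v && chi e x y u v : nat) =
  \sum_(u in cn e x y) #|[set v in cn e x y | e u v]|.
Proof.
rewrite [RHS]big_mkcond /=; apply: eq_bigr => u _.
case uW: (u \in cn e x y).
  rewrite -(sum_mems [set v in cn e x y | e u v]); apply: eq_bigr => v _; rewrite chiE uW !inE.
  by case: (e u v); case: (e x v); case: (e y v).
by rewrite big1 // => v _; rewrite chiE uW andbF.
Qed.

Definition sum4 (T : finType) (F : T -> T -> T -> T -> bool) : nat :=
  \sum_x \sum_y \sum_u \sum_v (F x y u v : nat).

Lemma sum4_le (T : finType) (F G H K : T -> T -> T -> T -> bool) :
  (forall x y u v, (F x y u v : nat) <= G x y u v + H x y u v + K x y u v) ->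
  sum4 F <= sum4 G + sum4 H + sum4 K.
Proof.
move=> h; rewrite /sum4 -!big_split; apply: leq_sum => x _.
rewrite -!big_split; apply: leq_sum => y _.
rewrite -!big_split; apply: leq_sum => u _.
rewrite -!big_split; apply: leq_sum => v _; exact: h.
Qed.

Lemma sum4_swap (T : finType) (F : T -> T -> T -> T -> bool) :
  sum4 F = sum4 (fun x y u v => F u v x y).
Proof.
rewrite /sum4.
transitivity (\sum_x \sum_u \sum_y \sum_v (F x y u v : nat)).
  by apply: eq_bigr => x _; rewrite exchange_big.
rewrite exchange_big /=.
transitivity (\sum_u \sum_x \sum_v \sum_y (F x y u v : nat)).
  by apply: eq_bigr => u _; apply: eq_bigr => x _; rewrite exchange_big.
by apply: eq_bigr => u _; rewrite exchange_big.
Qed.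

Lemma sum4_ext (T : finType) (F G : T -> T -> T -> T -> bool) :
  (forall x y u v, F x y u v = G x y u v) -> sum4 F = sum4 G.
Proof.
move=> h; rewrite /sum4; apply: eq_bigr => x _; apply: eq_bigr => y _.
apply: eq_bigr => u _; apply: eq_bigr => v _; by rewrite h.
Qed.

Lemma sum4_pair (T : finType) (F : T -> T -> bool) (G : T -> T -> T -> T -> bool) :
  sum4 (fun x y u v => F x y && G x y u v) =
  \sum_x \sum_y (F x y : nat) * \sum_u \sum_v (G x y u v : nat).
Proof.
rewrite /sum4; apply: eq_bigr => x _; apply: eq_bigr => y _.
rewrite big_distrr; apply: eq_bigr => u _; rewrite big_distrr; apply: eq_bigr => v _.
by case: (F x y); rewrite /= ?mul1n ?mul0n.
Qed.

Lemma chi_sym (T : finType) (e : rel T) x y u v :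
  symmetric e -> chi e u v x y = chi e x y u v.
Proof.
move=> es; rewrite /chi (es u x) (es u y) (es v x) (es v y).
by case: (e x u); case: (e x v); case: (e y u); case: (e y v).
Qed.

Lemma cauchyT (I : finType) (f : I -> nat) :
  (\sum_i f i) ^ 2 <= #|I| * \sum_i f i ^ 2.
Proof. exact: (cauchy predT f). Qed.

Definition Tsum (T : finType) (e : rel T) := \sum_x \sum_y (x != y) * #|cn e x y|.
Definition S2sum (T : finType) (e : rel T) := \sum_x \sum_y (x != y) * #|cn e x y| ^ 2.
Definition Qsum (T : finType) (e : rel T) :=
  sum4 (fun x y u v => [&& x != y, ~~ e x y, u != v, ~~ e u v & chi e x y u v]).

Lemma count_main (T : finType) (e : rel T) (k : nat) :
  simple_graph e -> Kss_free e k.+2 ->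
  S2sum e <= 2 * Qsum e + (4 * (4 ^ k.+1 * (k.+1 + k.+1 * k.+1)) + 2) * Tsum e.
Proof.
move=> hs hf; have [es _] := hs.
set L := 4 ^ k.+1 * (k.+1 + k.+1 * k.+1).
set Mall := sum4 (fun x y u v => (x != y) && ((u != v) && chi e x y u v)).
set Al := sum4 (fun x y u v => (x != y) && (e u v && chi e x y u v)).
set Be := sum4 (fun x y u v => e x y && ((u != v) && chi e x y u v)).
have hM : Mall <= Qsum e + Al + Be.
  apply: sum4_le => x y u v.
  by case: (x != y); case: (u != v); case: (e x y); case: (e u v); case: (chi e x y u v).
have hAB : Be = Al.
  rewrite /Be sum4_swap /Al; apply: sum4_ext => x y u v; rewrite chi_sym //.
  by case: (x != y); case: (e u v).
have hMT : Mall + Tsum e = S2sum e.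
  rewrite /Mall sum4_pair /Tsum /S2sum -big_split; apply: eq_bigr => x _.
  rewrite -big_split; apply: eq_bigr => y _.
  by rewrite /= -mulnDr sum_chi_neq.
have hA : 4 * Al <= S2sum e + 4 * L * Tsum e.
  rewrite /Al sum4_pair /S2sum /Tsum big_distrr big_distrr -big_split.
  apply: leq_sum => x _; rewrite big_distrr big_distrr -big_split; apply: leq_sum => y _.
  rewrite sum_chi_adj.
  have := density hs hf (subsetIl (nb e x) (nb e y)); rewrite -/(cn e x y) -/L => hd.
  case: (x != y) => /=; last by rewrite !muln0.
  by rewrite !mul1n.
lia.
Qed.

Lemma deg_identity (T : finType) (e : rel T) :
  symmetric e ->
  Tsum e + \sum_z #|nb e z| = \sum_z #|nb e z| ^ 2.
Proof.
move=> es.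
have h1 : \sum_x \sum_y #|cn e x y| = \sum_z #|nb e z| ^ 2.
  transitivity (\sum_x \sum_y \sum_z ((e z x && e z y) : nat)).
    apply: eq_bigr => x _; apply: eq_bigr => y _.
    rewrite -(sum_mems (cn e x y)); apply: eq_bigr => z _.
    by rewrite /cn !inE (es x z) (es y z).
  transitivity (\sum_x \sum_z \sum_y ((e z x && e z y) : nat)).
    by apply: eq_bigr => x _; rewrite exchange_big.
  rewrite exchange_big /=; apply: eq_bigr => z _.
  rewrite -(sum_mems (nb e z)) expnS expn1 big_distrl /=; apply: eq_bigr => u _.
  rewrite big_distrr /=; apply: eq_bigr => v _.
  by rewrite !inE; case: (e z u); case: (e z v).
rewrite -h1 /Tsum -big_split /=; apply: eq_bigr => x _.
rewrite (bigD1 x) //= eqxx mul0n add0n [RHS](bigD1 x) //= /cn setIid addnC; congr (_ + _).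
by apply: eq_bigr => y; rewrite eq_sym => /negbTE ->; rewrite mul1n.
Qed.

Lemma cauchy2 (T : finType) (e : rel T) :
  Tsum e ^ 2 <= #|T| ^ 2 * S2sum e.
Proof.
rewrite /Tsum /S2sum.
apply: (leq_trans (cauchyT _)).
rewrite expnS expn1 -mulnA leq_mul2l; apply/orP; right.
rewrite big_distrr /=; apply: leq_sum => x _.
apply: (leq_trans (cauchyT _)); rewrite leq_mul2l; apply/orP; right.
apply: leq_sum => y _; rewrite expnMn.
by case: (x != y); rewrite /= ?exp1n ?mul1n ?exp0n ?mul0n.
Qed.

Lemma edges_sub (T : finType) (e : rel T) (P : T -> T -> bool) :
  simple_graph e -> (forall x y, x != y -> P x y || P y x) ->
  nedges e <= #|[set p : T * T | e p.1 p.2 && P p.1 p.2]|.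
Proof.
move=> [es eirr] hP.
set A := [set p : T * T | e p.1 p.2 && P p.1 p.2].
apply: (@leq_trans #|[set [set p.1; p.2] | p in A]|); last exact: leq_imset_card.
apply: subset_leq_card; apply/subsetP => E; rewrite /edges inE => /andP [_ /existsP [x /existsP [y /andP [/eqP -> exy]]]].
have nxy : x != y by apply/negP => /eqP xy; move: exy; rewrite xy eirr.
case/orP: (hP x y nxy) => h.
  by apply/imsetP; exists (x, y) => //; rewrite inE /= exy h.
apply/imsetP; exists (y, x); first by rewrite inE /= es exy h.
by rewrite /= setUC.
Qed.

Lemma handshake (T : finType) (e : rel T) :
  simple_graph e -> 2 * nedges e <= \sum_z #|nb e z|.
Proof.
move=> hs.
pose r := fun x : T => (enum_rank x : nat).
have hP1 : forall x y, x != y -> (r x < r y) || (r y < r x).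
  move=> x y nxy; rewrite -neq_ltn; apply/negP => /eqP h.
  by move/negP: nxy; apply; apply/eqP; apply: enum_rank_inj; apply: val_inj.
have hP2 : forall x y, x != y -> (r y < r x) || (r x < r y) by move=> x y /hP1; rewrite orbC.
have h1 := edges_sub hs hP1; have h2 := edges_sub hs hP2.
have cardE : forall (P : T -> T -> bool), #|[set p : T * T | e p.1 p.2 && P p.1 p.2]| =
   \sum_x \sum_y (e x y && P x y : nat).
  move=> P; rewrite -sum_mems pair_big /=; apply: eq_bigr => p _; by rewrite inE.
have h1' := leq_trans h1 (eq_leq (cardE (fun x y => r x < r y))).
have h2' := leq_trans h2 (eq_leq (cardE (fun x y => r y < r x))).
cbv beta in h1', h2'.
have h3 : \sum_x \sum_y (e x y && (r x < r y) : nat) + \sum_x \sum_y (e x y && (r y < r x) : nat)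
   <= \sum_z #|nb e z|.
  rewrite -big_split; apply: leq_sum => x _; rewrite -big_split -(sum_mems (nb e x)).
  apply: leq_sum => y _; rewrite inE.
  case: (e x y) => //=; case: (ltngtP (r x) (r y)) => //.
lia.
Qed.

Lemma card4 (T : finType) (u x v y : T) :
  u != x -> u != v -> u != y -> x != v -> x != y -> v != y ->
  #|[set u; x; v; y]| = 4.
Proof.
move=> ux uv uy xv xy vy.
have -> : [set u; x; v; y] = y |: (v |: (u |: [set x])).
  apply/setP => z; rewrite !inE.
  by case: (z == u); case: (z == x); case: (z == v); case: (z == y).
rewrite !cardsU1 cards1 !inE.
rewrite (eq_sym y v) (negbTE vy) (eq_sym y u) (negbTE uy) (eq_sym y x) (negbTE xy).
by rewrite (eq_sym v u) (negbTE uv) (eq_sym v x) (negbTE xv) ux.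
Qed.

Lemma sum_dec (T : finType) (A : {set T}) (h : nat -> nat) :
  \sum_u (u \in A : nat) * h #|A :\ u| = #|A| * h (#|A| - 1).
Proof.
transitivity (\sum_u (u \in A : nat) * h (#|A| - 1)).
  apply: eq_bigr => u _; case uA: (u \in A) => /=; last by rewrite !mul0n.
  by rewrite [in RHS](cardsD1 u A) uA add1n subn1.
by rewrite -big_distrl /= sum_mems.
Qed.

Lemma sumL1 (T : finType) (B : {set T}) :
  \sum_u (u \in B : nat) * \sum_v (v \in B :\ u : nat) = #|B| * (#|B| - 1).
Proof.
transitivity (\sum_u (u \in B : nat) * #|B :\ u|).
  by apply: eq_bigr => u _; rewrite sum_mems.
exact: (sum_dec B (fun c => c)).
Qed.

Lemma sumL2 (T : finType) (C : {set T}) :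
  \sum_y (y \in C : nat) * \sum_u (u \in C :\ y : nat) * \sum_v (v \in C :\ y :\ u : nat)
  = #|C| * ((#|C| - 1) * (#|C| - 1 - 1)).
Proof.
transitivity (\sum_y (y \in C : nat) * (#|C :\ y| * (#|C :\ y| - 1))).
  by apply: eq_bigr => y _; rewrite -sumL1 big_distrr.
exact: (sum_dec C (fun c => c * (c - 1))).
Qed.

Lemma sumL3 (T : finType) (S : {set T}) :
  \sum_x (x \in S : nat) * \sum_y (y \in S :\ x : nat) * \sum_u (u \in S :\ x :\ y : nat) *
     \sum_v (v \in S :\ x :\ y :\ u : nat)
  = #|S| * ((#|S| - 1) * ((#|S| - 1 - 1) * (#|S| - 1 - 1 - 1))).
Proof.
transitivity (\sum_x (x \in S : nat) * (#|S :\ x| * ((#|S :\ x| - 1) * (#|S :\ x| - 1 - 1)))).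
  apply: eq_bigr => x _; rewrite -sumL2 big_distrr /=; apply: eq_bigr => y _.
  by rewrite mulnA big_distrr.
exact: (sum_dec S (fun c => c * ((c - 1) * (c - 1 - 1)))).
Qed.

Lemma good_ind (T : finType) (e : rel T) x y u v :
  simple_graph e ->
  [&& x != y, ~~ e x y, u != v, ~~ e u v & chi e x y u v] ->
  induced_C4_set e [set u; x; v; y].
Proof.
move=> [es eirr] /and5P [xy nexy uv neuv /and4P [exu exv eyu eyv]].
have ne : forall a b, e a b -> a != b by move=> a b hab; apply/negP => /eqP h; move: hab; rewrite h eirr.
apply/existsP; exists u; apply/existsP; exists x; apply/existsP; exists v; apply/existsP; exists y.
rewrite eqxx card4 //=; try by [apply: ne | rewrite eq_sym; apply: ne].
by rewrite (es u x) exu exv (es v y) eyv eyu nexy neuv.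
Qed.

Lemma fiber (T : finType) (e : rel T) (S : {set T}) :
  simple_graph e ->
  \sum_x \sum_y \sum_u \sum_v
     ([&& x != y, ~~ e x y, u != v, ~~ e u v & chi e x y u v] && (S == [set u; x; v; y]) : nat)
  <= 24 * induced_C4_set e S.
Proof.
move=> hs; have [es eirr] := hs.
case ind: (induced_C4_set e S); last first.
  rewrite muln0 leqn0; apply/eqP; apply: big1 => x _; apply: big1 => y _; apply: big1 => u _; apply: big1 => v _.
  case g: [&& x != y, ~~ e x y, u != v, ~~ e u v & chi e x y u v] => //=.
  case: eqP => // hS; exfalso.
  by have := good_ind hs g; rewrite -hS ind.
have h4 : #|S| = 4.
  by move: ind => /existsP [a /existsP [b /existsP [c /existsP [d /andP [_ /andP [/eqP h _]]]]]].
rewrite muln1.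
have ne : forall a b, e a b -> a != b by move=> a b hab; apply/negP => /eqP h; move: hab; rewrite h eirr.
apply: (@leq_trans (\sum_x (x \in S : nat) * \sum_y (y \in S :\ x : nat) * \sum_u (u \in S :\ x :\ y : nat) *
     \sum_v (v \in S :\ x :\ y :\ u : nat))); last by rewrite sumL3 h4.
apply: leq_sum => x _; rewrite !big_distrr /=; apply: leq_sum => y _; rewrite !big_distrr /=.
apply: leq_sum => u _; rewrite !big_distrr /=; apply: leq_sum => v _.
case g: [&& x != y, ~~ e x y, u != v, ~~ e u v & chi e x y u v] => //=.
case: eqP => // ->.
move: g => /and5P [xy nexy uv neuv /and4P [exu exv eyu eyv]].
have ux : u != x by rewrite eq_sym; apply: ne.
have vx : v != x by rewrite eq_sym; apply: ne.
have uy : u != y by rewrite eq_sym; apply: ne.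
have vy : v != y by rewrite eq_sym; apply: ne.
rewrite !inE !eqxx (eq_sym y x) xy uy ux (eq_sym v u) uv vy vx !orbT /=. by rewrite !mul1n.
Qed.

Lemma Qsum_le (T : finType) (e : rel T) :
  simple_graph e -> Qsum e <= 24 * n_induced_C4 e.
Proof.
move=> hs.
rewrite /Qsum /sum4.
set G := fun x y u v => [&& x != y, ~~ e x y, u != v, ~~ e u v & chi e x y u v].
have E1 : forall x y u v, (G x y u v : nat) =
    \sum_(S : {set T}) (G x y u v && (S == [set u; x; v; y]) : nat).
  move=> x y u v; rewrite (bigD1 [set u; x; v; y]) //= eqxx andbT big1 ?addn0 //.
  by move=> S /negbTE ->; rewrite andbF.
have E2 : \sum_x \sum_y \sum_u \sum_v (G x y u v : nat) =
   \sum_(S : {set T}) \sum_x \sum_y \sum_u \sum_v (G x y u v && (S == [set u; x; v; y]) : nat).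
  transitivity (\sum_x \sum_y \sum_u \sum_v \sum_(S : {set T}) (G x y u v && (S == [set u; x; v; y]) : nat)).
    apply: eq_bigr => x _; apply: eq_bigr => y _; apply: eq_bigr => u _; apply: eq_bigr => v _.
    exact: E1.
  transitivity (\sum_x \sum_y \sum_u \sum_(S : {set T}) \sum_v (G x y u v && (S == [set u; x; v; y]) : nat)).
    by apply: eq_bigr => x _; apply: eq_bigr => y _; apply: eq_bigr => u _; rewrite exchange_big.
  transitivity (\sum_x \sum_y \sum_(S : {set T}) \sum_u \sum_v (G x y u v && (S == [set u; x; v; y]) : nat)).
    by apply: eq_bigr => x _; apply: eq_bigr => y _; rewrite exchange_big.
  transitivity (\sum_x \sum_(S : {set T}) \sum_y \sum_u \sum_v (G x y u v && (S == [set u; x; v; y]) : nat)).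
    by apply: eq_bigr => x _; rewrite exchange_big.
  by rewrite exchange_big.
rewrite E2.
apply: (@leq_trans (\sum_(S : {set T}) 24 * induced_C4_set e S)).
  by apply: leq_sum => S _; apply: fiber.
rewrite -big_distrr leq_mul2l /n_induced_C4 -sum_mems; apply/orP; right.
by apply: eq_leq; apply: eq_bigr => S _; rewrite inE.
Qed.

From Stdlib Require Import Reals Lra Lia Psatz.

Lemma INR_addn a b : INR (a + b) = (INR a + INR b)%R.
Proof. exact: plus_INR. Qed.
Lemma INR_muln a b : INR (a * b) = (INR a * INR b)%R.
Proof. exact: mult_INR. Qed.
Lemma INR_expn a k : INR (expn a k) = (INR a ^ k)%R.
Proof. elim: k => [|k IH]; first by rewrite expn0. by rewrite expnS INR_muln IH. Qed.
Lemma INR_leq a b : a <= b -> (INR a <= INR b)%R.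
Proof. by move/leP; apply: le_INR. Qed.

Lemma real_final (n D T S1 S2 Q N E C X : R) :
  (n = 0 \/ 1 <= n)%R -> (0 <= T)%R -> (0 <= N)%R -> (0 <= E)%R -> (0 <= C)%R -> (6 <= X)%R ->
  (S2 <= 2 * Q + C * T)%R ->
  (T + D = S1)%R ->
  (D ^ 2 <= n * S1)%R ->
  (T ^ 2 <= n ^ 2 * S2)%R ->
  (Q <= 24 * N)%R ->
  (2 * E <= D)%R ->
  (18 * C <= X ^ 2)%R ->
  (X * (n * sqrt n) < E)%R ->
  (E ^ 4 / (16 * n ^ 4) <= N)%R.
Proof.
move=> hn T0 N0 E0 C0 X6 F1 F2 F3 F4 F5 F6 F7 H.
have n0 : (0 <= n)%R by case: hn; lra.
have sn0 := sqrt_pos n.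
have Epos : (0 < E)%R.
  have : (0 <= X * (n * sqrt n))%R by apply: Rmult_le_pos; [lra | apply: Rmult_le_pos].
  lra.
have Dpos : (0 < D)%R by lra.
have npos : (0 < n)%R.
  case: (Rle_lt_dec n 0) => // hn2.
  have hn0 : n = 0%R by lra.
  rewrite hn0 in F3; nra.
have ss : (sqrt n * sqrt n = n)%R by apply: sqrt_sqrt; lra.
have hXn : (2 * X * (n * sqrt n) < D)%R by lra.
have hD2 : (4 * X ^ 2 * n ^ 3 <= D ^ 2)%R.
  have h1 : (0 <= 2 * X * (n * sqrt n))%R by apply: Rmult_le_pos; [lra | apply: Rmult_le_pos].
  have h2 : ((2 * X * (n * sqrt n)) ^ 2 <= D ^ 2)%R by apply: pow_incr; lra.
  have -> : (4 * X ^ 2 * n ^ 3 = (2 * X * (n * sqrt n)) ^ 2)%R.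
    have -> : ((2 * X * (n * sqrt n)) ^ 2 = 4 * X ^ 2 * n ^ 2 * (sqrt n * sqrt n))%R by ring.
    rewrite ss; ring.
  exact: h2.
have n1 : (1 <= n)%R by case: hn => //; lra.
have X2 : (36 <= X ^ 2)%R by nra.
have n3 : (n ^ 2 <= n ^ 3)%R.
  have -> : (n ^ 3 = n ^ 2 * n)%R by ring.
  have : (0 <= n ^ 2)%R by nra.
  nra.
have hD12 : (12 * n <= D)%R.
  have h3 : (144 * n ^ 3 <= 4 * X ^ 2 * n ^ 3)%R.
    apply: Rmult_le_compat_r; first by nra.
    lra.
  have : (144 * n ^ 2 <= D ^ 2)%R by lra.
  nra.
have A1 : (11 / 12 * D ^ 2 <= n * T)%R by nra.
have A2 : (72 * (C * n ^ 3) <= D ^ 2)%R by nra.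
have A3 : (65 / 72 * D ^ 2 <= n * (T - C * n ^ 2))%R by nra.
have A4 : (T * (T - C * n ^ 2) <= n ^ 2 * (S2 - C * T))%R by nra.
have A5 : (11 / 12 * D ^ 2 * (65 / 72 * D ^ 2) <= n ^ 4 * (S2 - C * T))%R.
  have : (11 / 12 * D ^ 2 * (65 / 72 * D ^ 2) <= (n * T) * (n * (T - C * n ^ 2)))%R.
    apply: Rmult_le_compat => //; nra.
  nra.
have A6 : (S2 - C * T <= 48 * N)%R by lra.
have A7 : (E ^ 4 <= D ^ 4 / 16)%R.
  have : ((2 * E) ^ 4 <= D ^ 4)%R by apply: pow_incr; lra.
  lra.
have n4 : (0 < 16 * n ^ 4)%R by nra.
apply: (Rmult_le_reg_r (16 * n ^ 4)) => //.
rewrite /Rdiv Rmult_assoc Rinv_l; last by lra.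
nra.
Qed.

Lemma INR24 : INR 24 = 24%R. Proof. rewrite INR_IZR_INZ. reflexivity. Qed.
Lemma INR2 : INR 2 = 2%R. Proof. rewrite INR_IZR_INZ. reflexivity. Qed.
Lemma INR18 : INR 18 = 18%R. Proof. rewrite INR_IZR_INZ. reflexivity. Qed.
Lemma INR6 : INR 6 = 6%R. Proof. rewrite INR_IZR_INZ. reflexivity. Qed.

Lemma K11_noedge (T : finType) (e : rel T) :
  simple_graph e -> Kss_free e 1 -> forall z, nb e z = set0.
Proof.
move=> [es eirr] hf z; apply/setP => w; rewrite !inE.
apply/negP => hzw; apply: hf; exists [set z], [set w]; split; rewrite ?cards1 //.
  rewrite disjoints1 inE; apply/negP => /eqP h; move: hzw; rewrite h eirr.
  by [].
by move=> a b; rewrite !inE => /eqP -> /eqP ->.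
Qed.

Unset Implicit Arguments.

Theorem theorem5p2 (T : finType) (e : rel T) (s : nat) :
  simple_graph e ->
  0 < s ->
  Kss_free e s ->
  (6 ^ s * INR s * (INR #|T| * sqrt (INR #|T|)) < INR (nedges e))%R ->
  (INR (nedges e) ^ 4 / (16 * INR #|T| ^ 4) <= INR (n_induced_C4 e))%R.
Proof.
move=> hs s0 hfree H.
have hsh := handshake hs.
case: s s0 hfree H => [//|[|k]] _ hfree H.
  exfalso.
  have hD : \sum_z #|nb e z| = 0.
    by apply: big1 => z _; rewrite (K11_noedge hs hfree) cards0.
  rewrite hD leqn0 muln_eq0 /= in hsh; move/eqP: hsh => hE.
  move: H; rewrite hE /=.
  set r := INR _.
  have hr : (0 <= r)%R by exact: pos_INR.
  have := sqrt_pos r.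
  set q := sqrt r.
  nra.
have [es _] := hs.
set L := expn 4 k.+1 * (k.+1 + k.+1 * k.+1).
have F1 := count_main hs hfree.
have F2 := deg_identity es.
have F3 := cauchyT (fun z => #|nb e z|).
have F4 := cauchy2 e.
have F5 := Qsum_le hs.
have F7 : 18 * (4 * L + 2) <= expn (expn 6 k.+2 * k.+2) 2.
  rewrite /L (expnS 6 k.+1) -mulnn.
  set P := expn 6 k.+1; set Q4 := expn 4 k.+1.
  have hP : Q4 <= P by rewrite /P /Q4 leq_exp2r.
  have hP6 : 6 <= P by rewrite /P -{1}(expn1 6) leq_pexp2l.
  have hQ : 1 <= Q4 by rewrite /Q4 expn_gt0.
  have h1 : 6 * Q4 <= P * P by rewrite mulnC; apply: leq_mul.
  nia.
set C := INR (4 * L + 2).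
have R1 : (INR (S2sum e) <= 2 * INR (Qsum e) + C * INR (Tsum e))%R.
  have := INR_leq F1; rewrite INR_addn INR_muln INR_muln INR2 => h; exact: h.
have R2 : (INR (Tsum e) + INR (\sum_z #|nb e z|) = INR (\sum_z expn #|nb e z| 2))%R.
  by have := f_equal INR F2; rewrite INR_addn.
have R3 : (INR (\sum_z #|nb e z|) ^ 2 <= INR #|T| * INR (\sum_z expn #|nb e z| 2))%R.
  by have := INR_leq F3; rewrite INR_muln INR_expn.
have R4 : (INR (Tsum e) ^ 2 <= INR #|T| ^ 2 * INR (S2sum e))%R.
  by have := INR_leq F4; rewrite INR_muln !INR_expn.
have R5 : (INR (Qsum e) <= 24 * INR (n_induced_C4 e))%R.
  by have := INR_leq F5; rewrite INR_muln INR24.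
have R6 : (2 * INR (nedges e) <= INR (\sum_z #|nb e z|))%R.
  by have := INR_leq hsh; rewrite INR_muln INR2.
have R7 : (18 * C <= (6 ^ k.+2 * INR k.+2) ^ 2)%R.
  have := INR_leq F7; rewrite INR_muln INR18 !INR_expn INR_muln INR_expn INR6 => h; exact: h.
have hn : (INR #|T| = 0 \/ 1 <= INR #|T|)%R.
  case: #|T| => [|n]; [by left | right; rewrite S_INR; have := pos_INR n; lra].
have X6 : (6 <= 6 ^ k.+2 * INR k.+2)%R.
  have h6 : 6 <= expn 6 k.+2 by rewrite -{1}(expn1 6) leq_pexp2l.
  have h : 6 <= expn 6 k.+2 * k.+2 by rewrite -[6]muln1 leq_mul.
  by have := INR_leq h; rewrite INR_muln INR_expn !INR6.
exact: (real_final hn (pos_INR _) (pos_INR _) (pos_INR _) (pos_INR _) X6 R1 R2 R3 R4 R5 R6 R7 H).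
Qed.
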